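(* Consider a finite reward-free MDP with occupancy polytope $\Phi$. Let $\mathcal D=\{(d_e^k,\epsilon^k)\}_{k=1}^K$ with $K\ge1$, $d_e^k\in\Phi$, $\epsilon^k\ge0$, and let $d_e'\in\Phi$. Let $\mathcal Z_{\mathcal D}:=\bigcup_{k=1}^K\mathrm{supp}(d_e^k)$ and $\alpha(d_e',\mathcal D):=\sum_{(s,a)\notin\mathcal Z_{\mathcal D}}d_e'(s,a)$. Then there exists a reward $r_{\mathcal Z}\in\mathcal R(\mathcal D)$ such that \[\mathrm{subopt}(r_{\mathcal Z},d_e')=\frac{\alpha(d_e',\mathcal D)}{|\mathcal Z_{\mathcal D}|}.\]
   Context: The MDP has finite $S$, $A$, transitions $P$, initial distribution $\mu_0$, discount $\gamma\in(0,1)$; $(Md)(s)=\sum_a d(s,a)-\gamma\sum_{s',a'}P(s\mid s',a')d(s',a')$ and $\Phi=\{d\ge0:Md=(1-\gamma)\mu_0\}$. Rewards are $r\in\Delta(S\times A)$ (probability simplex). $\mathrm{subopt}(r,d):=\max_{\tilde d\in\Phi}r^\top\tilde d-r^\top d$. $\mathcal R(\mathcal D):=\{r\in\Delta(S\times A):\mathrm{subopt}(r,d_e^k)\le\epsilon^k\ \forall k\}$. $\mathrm{supp}(d)=\{(s,a):d(s,a)\ne0\}$. *)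

(* Defs.v *)
From HB Require Import structures.
From mathcomp Require Import all_boot all_order all_algebra.
From mathcomp Require Import mathcomp_extra boolp classical_sets reals.
Set Implicit Arguments. Unset Strict Implicit. Unset Printing Implicit Defensive.
Import Order.TTheory GRing.Theory Num.Theory.
Local Open Scope ring_scope.
Local Open Scope classical_set_scope.

Section MDP.
Variables (R : realType) (S A : finType).

(* P s' a' s = P(s | s', a') *)
Definition is_transition (P : S -> A -> S -> R) : Prop :=
  (forall s' a' s, 0 <= P s' a' s) /\ (forall s' a', \sum_(s : S) P s' a' s = 1).

Definition is_distr_S (mu0 : S -> R) : Prop :=
  (forall s, 0 <= mu0 s) /\ \sum_(s : S) mu0 s = 1.

Definition Mop (P : S -> A -> S -> R) (gamma : R) (d : S -> A -> R) (s : S) : R :=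
  \sum_(a : A) d s a - gamma * \sum_(s' : S) \sum_(a' : A) P s' a' s * d s' a'.

Definition Phi (P : S -> A -> S -> R) (mu0 : S -> R) (gamma : R) : set (S -> A -> R) :=
  [set d | (forall s a, 0 <= d s a) /\
           (forall s, Mop P gamma d s = (1 - gamma) * mu0 s)].

Definition inner (r d : S -> A -> R) : R := \sum_(s : S) \sum_(a : A) r s a * d s a.

Definition in_simplex (r : S -> A -> R) : Prop :=
  (forall s a, 0 <= r s a) /\ \sum_(s : S) \sum_(a : A) r s a = 1.

(* subopt(r,d) = max_{d~ in Phi} r^T d~ - r^T d  (max taken as sup; it is attained) *)
Definition subopt P mu0 gamma (r d : S -> A -> R) : R :=
  sup [set inner r dt | dt in Phi P mu0 gamma] - inner r d.

Definition feasible_rewards P mu0 gamma (K : nat) (de : 'I_K -> S -> A -> R)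
    (eps : 'I_K -> R) : set (S -> A -> R) :=
  [set r | in_simplex r /\ forall k, subopt P mu0 gamma r (de k) <= eps k].

Definition ZD (K : nat) (de : 'I_K -> S -> A -> R) : {set S * A} :=
  [set x | [exists k, de k x.1 x.2 != 0]].

Definition alpha (K : nat) (d' : S -> A -> R) (de : 'I_K -> S -> A -> R) : R :=
  \sum_(x in ~: ZD de) d' x.1 x.2.

End MDP.

(* Main.v *)
Require Import Defs.
From HB Require Import structures.
From mathcomp Require Import all_boot all_order all_algebra.
From mathcomp Require Import mathcomp_extra boolp classical_sets reals.
From mathcomp Require Import ring.
Import Order.TTheory GRing.Theory Num.Theory.
Local Open Scope ring_scope.
Local Open Scope classical_set_scope.

Theorem mainTheorem4 (R : realType) (S A : finType)
  (P : S -> A -> S -> R) (mu0 : S -> R) (gamma : R)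
  (HP : is_transition P) (Hmu0 : is_distr_S mu0)
  (Hg0 : 0 < gamma) (Hg1 : gamma < 1)
  (K : nat) (HK : (0 < K)%N)
  (de : 'I_K -> S -> A -> R) (eps : 'I_K -> R)
  (Hde : forall k, Phi P mu0 gamma (de k)) (Heps : forall k, 0 <= eps k)
  (d' : S -> A -> R) (Hd' : Phi P mu0 gamma d') :
  exists rZ : S -> A -> R,
    feasible_rewards P mu0 gamma de eps rZ /\
    subopt P mu0 gamma rZ d' = alpha d' de / (#|ZD de|)%:R.
Proof.
have mass : forall d, Phi P mu0 gamma d -> \sum_(x : S * A) d x.1 x.2 = 1.
  move=> d [d0 dM].
  have : \sum_s Mop P gamma d s = \sum_s (1 - gamma) * mu0 s by apply: eq_bigr => s _; exact: dM.
  rewrite -mulr_sumr Hmu0.2 mulr1 /Mop sumrB -mulr_sumr.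
  rewrite [X in _ - gamma * X = _](_ : _ = \sum_s' \sum_a' d s' a').
    rewrite -pair_bigA /= => h.
    have hg : 1 - gamma != 0 by rewrite subr_eq0 eq_sym lt_eqF.
    apply: (mulfI hg); by rewrite mulrBl mul1r h mulr1.
  rewrite exchange_big; apply: eq_bigr => s' _.
  rewrite exchange_big; apply: eq_bigr => a' _.
  by rewrite -mulr_suml HP.2 mul1r.
set Z := ZD de.
set N : R := (#|Z|)%:R.
have splitZ : forall d : S -> A -> R, \sum_(x : S * A) d x.1 x.2 =
    \sum_(x in Z) d x.1 x.2 + \sum_(x in ~: Z) d x.1 x.2.
  move=> d; rewrite (bigID (fun x => x \in Z)) /=; congr (_ + _).
  all: try by apply: eq_bigl => x; rewrite !inE.
have outZ : forall k, \sum_(x in ~: Z) de k x.1 x.2 = 0.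
  move=> k; apply: big1 => x; rewrite !inE => /existsPn /(_ k).
  by rewrite negbK => /eqP.
have inZ : forall k, \sum_(x in Z) de k x.1 x.2 = 1.
  by move=> k; rewrite -(mass _ (Hde k)) splitZ outZ addr0.
have k0 : 'I_K by exists 0%N.
have Npos : 0 < N.
  rewrite ltr0n lt0n; apply/negP => /eqP /cards0_eq Z0.
  by move: (inZ k0); rewrite Z0 big_set0 => /eqP; rewrite eq_sym oner_eq0.
pose r := fun s a => if (s, a) \in Z then N^-1 else 0.
have innerE : forall d, inner r d = N^-1 * \sum_(x in Z) d x.1 x.2.
  move=> d; rewrite /inner pair_bigA /= [in RHS]big_mkcond /= mulr_sumr.
  by apply: eq_bigr => -[s a] _ /=; rewrite /r; case: ifP; rewrite ?mulr0 ?mul0r.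
have supE : sup [set inner r dt | dt in Phi P mu0 gamma] = N^-1.
  apply/eqP; rewrite eq_le; apply/andP; split.
    apply: ge_sup; first by exists (inner r (de k0)), (de k0).
    move=> _ [dt Hdt <-]; rewrite innerE -[leRHS]mulr1 ler_pM2l ?invr_gt0 //.
    rewrite -(mass _ Hdt) splitZ lerDl; apply: sumr_ge0 => x _; exact: Hdt.1.
  have -> : N^-1 = inner r (de k0) by rewrite innerE inZ mulr1.
  apply: ub_le_sup; last by exists (de k0).
  exists N^-1 => _ [dt Hdt <-]; rewrite innerE -[leRHS]mulr1 ler_pM2l ?invr_gt0 //.
  rewrite -(mass _ Hdt) splitZ lerDl; apply: sumr_ge0 => x _; exact: Hdt.1.
exists r; split; first split.
- split.
    by move=> s a; rewrite /r; case: ifP => _ //; rewrite invr_ge0 ltW.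
  rewrite pair_bigA /= big_mkcond /=.
  rewrite (eq_bigr (fun x => if x \in Z then N^-1 else 0)); last by move=> -[s a].
  by rewrite -big_mkcond /= sumr_const -mulr_natr -/N mulVf ?gt_eqF.
- move=> k; rewrite /subopt supE innerE inZ mulr1 subrr; exact: Heps.
rewrite /subopt supE innerE /alpha.
have := mass _ Hd'; rewrite splitZ => h.
rewrite -[X in X - _]mulr1 -h -/Z; field; rewrite gt_eqF //.
Qed.
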